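(* For every Borel function $f:\mathbb{R}\to\mathbb{R}$ there is a nonempty perfect set $P\subseteq\mathbb{R}$ such that $f^{-1}[P]$ is both meager and Lebesgue null. *)

(* Defs.v *)
From HB Require Import structures.
From mathcomp Require Import all_boot all_order all_algebra.
From mathcomp Require Import all_classical all_reals all_analysis.
Set Implicit Arguments. Unset Strict Implicit. Unset Printing Implicit Defensive.
Import Order.TTheory GRing.Theory Num.Theory.
Local Open Scope classical_set_scope.

Definition nowhere_dense {T : topologicalType} (A : set T) : Prop :=
  interior (closure A) = set0.

Definition meager {T : topologicalType} (A : set T) : Prop :=
  exists F : (set T)^nat,
    (forall n, nowhere_dense (F n)) /\ A `<=` \bigcup_n F n.

(* Main.v *)
Require Import Defs.
From HB Require Import structures.
From mathcomp Require Import all_boot all_order all_algebra.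
From mathcomp Require Import all_classical all_reals all_analysis.
From mathcomp Require Import ring lra.
Import Order.TTheory GRing.Theory Num.Theory.
Import numFieldNormedType.Exports.
Local Open Scope classical_set_scope.
Local Open Scope ring_scope.
Set Implicit Arguments. Unset Strict Implicit. Unset Printing Implicit Defensive.
Section Phi.
Variable R : realType.
Implicit Types b : nat -> bool.

Definition dig b (n : nat) : R := if b n then 2 / 3 ^+ n.+1 else 0.
Definition Ssum b (N : nat) : R := \sum_(n < N) dig b n.

Lemma three_pos n : 0 < (3 : R) ^+ n.
Proof. by apply: exprn_gt0. Qed.

Lemma dig_ge0 b n : 0 <= dig b n.
Proof. rewrite /dig; case: (b n) => //; apply: divr_ge0 => //; exact/ltW/three_pos. Qed.

Lemma Ssum_S b N : Ssum b N.+1 = Ssum b N + dig b N.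
Proof. by rewrite /Ssum big_ord_recr. Qed.

Lemma Ssum_mono b N M : (N <= M)%N -> Ssum b N <= Ssum b M.
Proof.
elim: M => [|M IH]; first by rewrite leqn0 => /eqP ->.
rewrite leq_eqVlt => /orP[/eqP -> //| ].
rewrite ltnS => /IH h; rewrite Ssum_S; apply: (le_trans h).
by rewrite lerDl dig_ge0.
Qed.

Lemma inv3S m : ((3 : R) ^+ m)^-1 - ((3 : R) ^+ m.+1)^-1 = 2 / 3 ^+ m.+1.
Proof.
have h := three_pos m; rewrite exprS; field.
by rewrite lt0r_neq0.
Qed.

Lemma Ssum_tail b N k :
  Ssum b (N + k) <= Ssum b N + (((3 : R) ^+ N)^-1 - ((3 : R) ^+ (N + k))^-1).
Proof.
elim: k => [|k IH]; first by rewrite addn0 subrr addr0.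
rewrite addnS Ssum_S.
have hd : dig b (N + k) <= 2 / 3 ^+ (N + k).+1.
  rewrite /dig; case: (b _) => //; apply: divr_ge0 => //; exact/ltW/three_pos.
have := inv3S (N + k); lra.
Qed.

Lemma Ssum_le b N M : Ssum b M <= Ssum b N + ((3 : R) ^+ N)^-1.
Proof.
have hp : 0 < ((3 : R) ^+ N)^-1 by rewrite invr_gt0 three_pos.
case: (leqP M N) => hMN.
  by have := Ssum_mono b hMN; lra.
rewrite -(subnKC (ltnW hMN)).
have := Ssum_tail b N (M - N).
have : 0 < ((3 : R) ^+ (N + (M - N)))^-1 by rewrite invr_gt0 three_pos.
lra.
Qed.

Definition phi b : R := sup (range (Ssum b)).

Lemma phi_has_sup b : has_sup (range (Ssum b)).
Proof.
split; first by exists (Ssum b 0), 0%N.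
exists (Ssum b 0 + ((3 : R) ^+ 0)^-1) => _ [M _ <-]; exact: Ssum_le.
Qed.

Lemma phi_ge b N : Ssum b N <= phi b.
Proof. by apply: sup_upper_bound; [exact: phi_has_sup| exists N]. Qed.

Lemma phi_le b N : phi b <= Ssum b N + ((3 : R) ^+ N)^-1.
Proof.
apply: ge_sup; first by exists (Ssum b 0), 0%N.
by move=> _ [M _ <-]; exact: Ssum_le.
Qed.

Lemma Ssum_agree b b' N : (forall n, (n < N)%N -> b n = b' n) ->
  Ssum b N = Ssum b' N.
Proof. by move=> h; apply: eq_bigr => i _; rewrite /dig h. Qed.

Lemma phi_close b b' N : (forall n, (n < N)%N -> b n = b' n) ->
  `|phi b - phi b'| <= ((3 : R) ^+ N)^-1.
Proof.
move=> /Ssum_agree e.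
have := phi_ge b N; have := phi_le b N.
have := phi_ge b' N; have := phi_le b' N.
rewrite ler_norml e; lra.
Qed.

Lemma phi_lt b b' N : (forall n, (n < N)%N -> b n = b' n) ->
  b N = false -> b' N = true -> phi b < phi b'.
Proof.
move=> /Ssum_agree e bN b'N.
have h1 := phi_le b N.+1; have h2 := phi_ge b' N.+1.
rewrite !Ssum_S /dig bN b'N e in h1 h2.
have hp := three_pos N.+1.
have : 0 < ((3 : R) ^+ N.+1)^-1 by rewrite invr_gt0.
lra.
Qed.

Lemma phi_inj : injective phi.
Proof.
move=> b b' e; apply/funext => n; apply/eqP/negP => /negP hn.
have ex : exists n, b n != b' n by exists n.
case: (ex_minnP ex) => N hN hmin.
have agree : forall m, (m < N)%N -> b m = b' m.
  move=> m hm; apply/eqP/negP => /negP/hmin; rewrite leqNgt hm //.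
move: hN; case eb: (b N); case eb': (b' N) => // _.
- have := phi_lt (fun m h => esym (agree m h)) eb' eb; rewrite e; lra.
- have := phi_lt agree eb eb'; rewrite e; lra.
Qed.

Lemma pow3_small (e : R) : 0 < e -> exists N, ((3 : R) ^+ N)^-1 < e.
Proof.
move=> e0; exists (Num.bound (e^-1)).
set N := Num.bound (e^-1).
have h1 : e^-1 < N%:R by apply: archi_boundP; rewrite invr_ge0 ltW.
have h2 : (N%:R : R) <= 3 ^+ N.
  by rewrite -natrX ler_nat; apply: ltnW; apply: ltn_expl.
rewrite -(invrK e) ltf_pV2 ?posrE ?three_pos ?invr_gt0 //.
exact: lt_le_trans h2.
Qed.

End Phi.
Section Perf.
Variable R : realType.

Definition il (t s : nat -> bool) (n : nat) : bool :=
  if odd n then s n./2 else t n./2.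
Definition psi (t : nat -> bool) (s : cantor_space) : R := phi R (il t s).
Definition Pt t : set R := range (psi t).

Lemma il_inj_t t t' s s' : il t s = il t' s' -> t = t'.
Proof.
move=> e; apply/funext=> n; have := congr1 (fun g => g n.*2) e.
by rewrite /il odd_double doubleK.
Qed.

Lemma il_inj_s t s s' : il t s = il t s' -> s = s'.
Proof.
move=> e; apply/funext=> n; have := congr1 (fun g => g n.*2.+1) e.
have h : (n.*2.+1)./2 = n by have := half_bit_double n true.
by rewrite /il h /= odd_double.
Qed.

Lemma agree_nbhs (s : cantor_space) N :
  nbhs s [set s' : cantor_space | forall n, (n < N)%N -> s' n = s n].
Proof.
elim: N => [|N IH].
  by apply: filterS filterT => s' _ n.
have h1 : nbhs s [set s' : cantor_space | s' N = s N].
  have := @proj_continuous nat (fun _ => bool) N s.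
  by move=> /(_ [set s N]) /=; apply.
apply: filterS (filterI IH h1) => s' [h h'] n.
rewrite ltnS leq_eqVlt => /orP[/eqP -> //|]; exact: h.
Qed.

Lemma psi_cont t : continuous (psi t).
Proof.
move=> s; apply/cvgrPdist_lt => e e0.
have [N hN] := pow3_small e0.
apply: filterS (agree_nbhs s N) => s' hs'.
apply: le_lt_trans hN; apply: phi_close => n hn.
have hn2 : (n./2 < N)%N.
  apply: leq_ltn_trans hn; rewrite -[leqRHS]doubleK half_leq //.
  by rewrite -addnn leq_addr.
by rewrite /il; case: odd; rewrite // hs'.
Qed.

Lemma Pt_n0 t : Pt t !=set0.
Proof. by exists (psi t (fun=> false)), (fun=> false). Qed.

Lemma Pt_disj t t' x : Pt t x -> Pt t' x -> t = t'.
Proof.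
move=> [s _ <-] [s' _] /phi_inj e; exact: il_inj_t (esym e).
Qed.

Lemma Pt_closed t : closed (Pt t).
Proof.
apply: compact_closed; first exact: norm_hausdorff.
apply: continuous_compact; last exact: cantor_space_compact.
by apply: continuous_subspaceT => x; apply: psi_cont.
Qed.

Lemma Pt_perfect t : perfect_set (Pt t).
Proof.
apply/perfectP; split; first exact: Pt_closed.
apply/seteqP; split => // x [/set_mem [s _ <-] [V hV VP]].
have W : nbhs s (psi t @^-1` V) by exact: psi_cont.
move: W; rewrite nbhsE; move=> [Q [oQ Qs] QW].
have [y [z [Qy Qz yz]]] := (perfectTP_ex.1 cantor_perfect) Q oQ (ex_intro _ s Qs).
have key : forall w, Q w -> w = s.
  move=> w Qw; have : (V `&` Pt t) (psi t w) by split; [exact: QW | exists w].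
  by rewrite VP => /phi_inj /il_inj_s.
by move: yz; rewrite (key _ Qy) (key _ Qz) eqxx.
Qed.

End Perf.
Lemma not_countable_cantor : ~ countable [set: nat -> bool].
Proof.
move=> /countable_injP [f finj].
have /choice [g hg] : forall n, exists y : nat -> bool,
    (exists x, f x = n) -> f y = n.
  move=> n.
  case: (pselect (exists x, f x = n)) => [[x hx]|hn].
    by exists x.
  by exists (fun=> false).
pose d n := ~~ g n n.
have : g (f d) = d by apply: finj; rewrite ?inE //; apply: hg; exists d.
move=> /(congr1 (fun h => h (f d))); rewrite /d.
by case: (g (f d) (f d)).
Qed.

Section Meager.
Variable T : topologicalType.
Implicit Types A B : set T.

Lemma nd0 : nowhere_dense (@set0 T).
Proof. by rewrite /nowhere_dense closure0 interior0. Qed.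

Lemma meager0 : meager (@set0 T).
Proof. by exists (fun=> set0); split => // n; exact: nd0. Qed.

Lemma meagerS A B : A `<=` B -> meager B -> meager A.
Proof. by move=> AB [F [h1 h2]]; exists F; split => //; exact: subset_trans h2. Qed.

Lemma meager_nd A : nowhere_dense A -> meager A.
Proof.
move=> h; exists (fun n => if n is 0 then A else set0); split.
  by case => [|n] /=; [exact: h | exact: nd0].
by move=> x Ax; exists 0%N.
Qed.

Lemma meager_bigcup (F : (set T)^nat) : (forall n, meager (F n)) ->
  meager (\bigcup_n F n).
Proof.
move=> hF.
have /choice [G hG] : forall n, exists G : (set T)^nat,
    (forall m, nowhere_dense (G m)) /\ F n `<=` \bigcup_m G m.
  by move=> n; have [G ?] := hF n; exists G.
exists (fun k => match @unpickle (prod nat nat) k with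
         | Some p => G p.1 p.2 | None => set0 end); split.
  by move=> k; case: unpickle => [[i j]|]; [exact: (hG i).1 | exact: nd0].
move=> x [n _ /(hG n).2 [m _ xm]].
by exists (pickle (n, m)) => //; rewrite pickleK.
Qed.

Lemma meagerU A B : meager A -> meager B -> meager (A `|` B).
Proof.
move=> hA hB.
apply: (meagerS (B := (\bigcup_n (if n is 0 then A else B)))).
  by move=> x [Ax|Bx]; [exists 0%N | exists 1%N].
by apply: meager_bigcup => -[|n].
Qed.

Lemma nd_bd (U : set T) : open U -> nowhere_dense (closure U `\` U).
Proof.
move=> oU.
have cC : closed (closure U `&` ~` U).
  by apply: closedI; [exact: closed_closure | exact: open_closedC].
rewrite /nowhere_dense setDE -(closure_id _).1 //.
apply/seteqP; split => // x hx.
have hx' : (closure U `&` ~` U) x by apply: interior_subset.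
have [y [Uy [_ nUy]]] := hx'.1 _ hx.
exact: nUy.
Qed.

Definition BP A := exists U, open U /\ meager ((A `\` U) `|` (U `\` A)).

Lemma BP_open U : open U -> BP U.
Proof.
move=> oU; exists U; split => //.
by rewrite !setDv setU0; exact: meager0.
Qed.

Lemma BP_C A : BP A -> BP (~` A).
Proof.
move=> [U [oU mU]]; exists (~` closure U); split.
  by apply: closed_openC; exact: closed_closure.
apply: (meagerS (B := (((A `\` U) `|` (U `\` A)) `|` (closure U `\` U)))).
  move=> x [[nAx nVx]|[Vx nnAx]].
    have cx : closure U x by apply: contra_notP nVx.
    case: (pselect (U x)) => Ux; first by left; right.
    by right.
  have Ax : A x by apply: contra_notP nnAx.
  have nUx : ~ U x by move=> Ux; apply: Vx; exact: subset_closure.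
  by left; left.
by apply: meagerU => //; apply: meager_nd; exact: nd_bd.
Qed.

Lemma BP_bigcup (F : (set T)^nat) : (forall n, BP (F n)) -> BP (\bigcup_n F n).
Proof.
move=> hF.
have /choice [U hU] : forall n, exists U : set T, open U /\
    meager ((F n `\` U) `|` (U `\` F n)).
  exact: hF.
exists (\bigcup_n U n); split.
  by apply: bigcup_open => n _; exact: (hU n).1.
apply: (meagerS (B := (\bigcup_n ((F n `\` U n) `|` (U n `\` F n))))).
  move=> x [[[n _ Fx] nUx]|[[n _ Ux] nFx]].
    exists n; first by [].
    by left; split => // Ux; apply: nUx; exists n.
  exists n; first by [].
  by right; split => // Fx; apply: nFx; exists n.
by apply: meager_bigcup => n; exact: (hU n).2.
Qed.

End Meager.
Section RCat.
Variable R : realType.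

Lemma ball_sub (x e : R) (P : set R) : ball x e `<=` P ->
  `]x - e, x + e[%classic `<=` P.
Proof. by rewrite ball_itv. Qed.

Lemma nd_set1 (b : R) : nowhere_dense [set b].
Proof.
rewrite /nowhere_dense -(closure_id _).1; last exact: closed_eq.
apply/seteqP; split => // x hx.
have xb : x = b by apply: nbhs_singleton hx.
move: hx; rewrite xb => /nbhs_ballP [e /= e0 /ball_sub he].
have : `]b - e, b + e[%classic (b + e / 2).
  by rewrite /= in_itv /=; apply/andP; split; lra.
by move/he => /= h; lra.
Qed.

Lemma BP_oc (a b : R) : BP `]a, b]%classic.
Proof.
exists `]a, b[%classic; split; first exact: itv_open.
apply: (meagerS (B := [set b])); last exact/meager_nd/nd_set1.
move=> x [[/= h1 h2]|[/= h1 h2]].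
  move: h1 h2; rewrite !in_itv /= => /andP[ax xb] /negP; rewrite ax /=.
  by rewrite lt_neqAle xb andbT negbK => /eqP.
by exfalso; apply: h2; move: h1; rewrite !in_itv /= => /andP[-> /ltW ->].
Qed.

Lemma measurable_BP (A : set R) : measurable A -> BP A.
Proof.
have sig : sigma_algebra setT (@BP R).
  split.
  - exact: BP_open open0.
  - by move=> B hB; rewrite setTD; exact: BP_C.
  - exact: BP_bigcup.
have sub : (R.-ocitv.-measurable) `<=` @BP R.
  by move=> _ [x _ <-]; exact: BP_oc.
exact: (smallest_sub sig sub).
Qed.

Lemma open_not_meager (W : set R) : open W -> W !=set0 -> ~ meager W.
Proof.
move=> oW [w Ww] [F [ndF WF]].
have hd : forall i, open (~` closure (F i)) /\ dense (~` closure (F i)).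
  move=> i; split; first by apply: closed_openC; exact: closed_closure.
  move=> Q [z Qz] oQ; apply: contrapT => hne.
  have : (closure (F i))° z.
    apply: (filterS (P := Q)); last exact: open_nbhs_nbhs.
    by move=> y Qy; apply: contrapT => ny; apply: hne; exists y.
  by rewrite (ndF i).
have := @Baire R R^o (fun i => ~` closure (F i)) hd W (ex_intro _ w Ww) oW.
move=> [x [Wx hx]].
have [n _ Fx] := WF x Wx.
exact: (hx n I) (subset_closure Fx).
Qed.

Lemma nonmeager_countable (I : Type) (A : I -> set R) :
  (forall i, BP (A i)) -> (forall i j x, A i x -> A j x -> i = j) ->
  countable [set i | ~ meager (A i)].
Proof.
move=> hBP hdisj.
have /choice [c hc] : forall i, exists c : rat * rat, ~ meager (A i) ->
    ratr c.1 < ratr c.2 :> R /\ meager (`]ratr c.1, ratr c.2[%classic `\` A i).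
  move=> i; case: (pselect (meager (A i))) => hm.
    by exists (0, 0).
  have [U [oU mU]] := hBP i.
  have [x Ux] : U !=set0.
    apply/set0P/negP => /eqP U0; apply: hm.
    apply: (meagerS (B := (A i `\` U) `|` (U `\` A i))) => // y Ay.
    by left; split => //; rewrite U0.
  have := oU x Ux; move=> /nbhs_ballP [e /= e0 /ball_sub he].
  have [p hp] := @rat_in_itvoo R (x - e) x ltac:(lra).
  have [q hq] := @rat_in_itvoo R x (x + e) ltac:(lra).
  move: hp hq; rewrite !in_itv /= => /andP[p1 p2] /andP[q1 q2].
  exists (p, q) => _ /=; split; first lra.
  apply: (meagerS (B := (A i `\` U) `|` (U `\` A i))) => // y [hy nAy].
  right; split => //; apply: he; move: hy; rewrite /= !in_itv /=.
  by move=> /andP[y1 y2]; apply/andP; split; lra.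
apply/countable_injP; exists (fun i => pickle (c i)).
move=> i j; rewrite !inE /= => hi hj /(pcan_inj pickleK) cij.
have [lt1 m1] := hc i hi; have [lt2 m2] := hc j hj.
rewrite cij in lt1 m1.
have ne : (`]ratr (c j).1, ratr (c j).2[%classic : set R) !=set0.
  exists ((ratr (c j).1 + ratr (c j).2) / 2 : R).
  by rewrite /= in_itv /=; apply/andP; split; lra.
have := open_not_meager (itv_open _ _) ne.
apply: contra_notP => ij.
apply: (meagerS (B := (`]ratr (c j).1, ratr (c j).2[%classic `\` A i) `|`
                      (`]ratr (c j).1, ratr (c j).2[%classic `\` A j))); last first.
  exact: meagerU.
move=> y hy; case: (pselect (A i y)) => Ai; last by left.
case: (pselect (A j y)) => Aj; last by right.
by exfalso; apply: ij; exact: hdisj Ai Aj.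
Qed.

End RCat.
Section Meas.
Variable R : realType.
Local Notation mu := (@lebesgue_measure R).

Definition Bn (A : set R) (n : nat) : set R :=
  A `&` `[- (n%:R : R), n%:R]%classic.

Lemma Bn_fin (I : pointedType) (A : I -> set R) n k :
  (forall i, measurable (A i)) -> (forall i j x, A i x -> A j x -> i = j) ->
  finite_set [set i | ((k.+1%:R : R)^-1)%:E < mu (Bn (A i) n)]%E.
Proof.
move=> mA hdisj; apply: contrapT => /infiniteP /pcard_leP [f].
have fS (m : nat) : (((k.+1%:R : R)^-1)%:E < mu (Bn (A (f m)) n))%E.
  by have := @funS _ _ _ _ f m Logic.I; rewrite /=.

have finj : injective f by move=> a b; apply: (@inj _ _ _ f); rewrite inE.
pose F m := Bn (A (f m)) n.
have mF m : measurable (F m).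
  by apply: measurableI; [exact: mA | exact: measurable_itv].
have tF : trivIset setT F.
  apply/trivIsetP => a b _ _ ab; apply/seteqP; split => // x [[h1 _] [h2 _]].
  by move: ab; rewrite (finj _ _ (hdisj _ _ _ h1 h2)) eqxx.
pose M := ((n.*2).+1 * k.+1)%N.
have e := @measure_bigsetU _ _ _ mu F mF tF M.
have h1 : (mu (\big[setU/set0]_(i < M) F i) <= (n.*2%:R : R)%:E)%E.
  apply: (@le_trans _ _ (mu `[- (n%:R : R), n%:R]%classic)).
    apply: le_measure; rewrite ?inE.
    - by apply: bigsetU_measurable => i _; exact: mF.
    - exact: measurable_itv.
    - by move=> x; rewrite -bigcup_mkord => -[i _ [_ ?]].
  rewrite lebesgue_measure_itv /= lte_fin.
  case: ifPn => _; last by rewrite lee_fin ler0n.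
  by rewrite -EFinD lee_fin opprK -natrD addnn.
have h2 : (((M%:R : R) / k.+1%:R)%:E <= \sum_(i < M) mu (F i))%E.
  apply: (@le_trans _ _ (\sum_(i < M) ((k.+1%:R : R)^-1)%:E)%E).
    by rewrite sumEFin lee_fin sumr_const card_ord mulr_natl.
  by apply: lee_sum => i _; exact/ltW/fS.
have : ((M%:R : R) / k.+1%:R <= n.*2%:R).
  by rewrite -lee_fin; apply: le_trans h2 _; rewrite -e.
rewrite /M natrM mulfK ?pnatr_eq0 // ler_nat ltnn //.
Qed.

End Meas.
Section Meas2.
Variable R : realType.
Local Notation mu := (@lebesgue_measure R).

Lemma pos_countable (I : pointedType) (A : I -> set R) :
  (forall i, measurable (A i)) -> (forall i j x, A i x -> A j x -> i = j) ->
  countable [set i | mu (A i) != 0%E].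
Proof.
move=> mA hdisj.
apply: (@sub_countable _ _ _ (\bigcup_(p in [set: nat * nat])
   [set i | ((p.2.+1%:R : R)^-1)%:E < mu (Bn (A i) p.1)]%E)); last first.
  apply: bigcup_countable; first exact: countableP.
  by move=> p _; apply: finite_set_countable; exact: Bn_fin.
apply: subset_card_le => i /= hi.
have [n hn] : exists n, mu (Bn (A i) n) != 0%E.
  apply: contrapT => /forallNP h; move/eqP: hi; apply.
  apply/(negligibleP mu (mA i)); apply: (@negligibleS _ _ _ mu (\bigcup_n Bn (A i) n)).
    move=> x Ax; exists (Num.bound `|x|) => //; split => //.
    have := @archi_boundP R `|x| (normr_ge0 _).
    rewrite /= in_itv /= => /ltW; rewrite ler_norml => /andP[h1 h2].
    by apply/andP; split.
  apply: negligible_bigcup => m; apply/negligibleP.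
    by apply: measurableI; [exact: mA | exact: measurable_itv].
  by apply: contrapT => /eqP; exact: h.
have hpos : (0 < mu (Bn (A i) n))%E by rewrite lt0e hn measure_ge0.
case E : (mu (Bn (A i) n)) => [r| |]; rewrite E in hpos => //.
  rewrite lte_fin in hpos.
  exists (n, Num.bound (r^-1)) => //=; rewrite E.
  rewrite lte_fin -(invrK r) ltf_pV2 ?posrE ?invr_gt0 ?ltr0n //.
  apply: lt_trans (archi_boundP _) _; first by rewrite invr_ge0 ltW.
  by rewrite invrK ltr_nat.
by exists (n, 0%N) => //=; rewrite E ltry.
Qed.

End Meas2.
Lemma countable_U2 T (A B : set T) : countable A -> countable B ->
  countable (A `|` B).
Proof.
move=> cA cB.
have -> : A `|` B = \bigcup_(b in [set: bool]) (if b then A else B).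
  apply/seteqP; split => x.
    by case=> h; [exists true | exists false].
  by move=> [[] _ h]; [left | right].
apply: bigcup_countable; first exact: countableP.
by move=> [] _.
Qed.

Theorem mainTheorem16 (R : realType) (f : R -> R) :
  measurable_fun [set: R] f ->
  exists P : set R,
    [/\ P !=set0, perfect_set P,
        meager (f @^-1` P) &
        (@lebesgue_measure R).-negligible (f @^-1` P)].
Proof.
move=> mf.
pose A (t : cantor_space) := f @^-1` @Pt R t.
have mA t : measurable (A t).
  by have := mf measurableT _ (measurable_realfun.closed_measurable (@Pt_closed R t)); rewrite setTI.
have dA t t' x : A t x -> A t' x -> t = t'.
  by move=> h1 h2; exact: Pt_disj h1 h2.
have c1 := nonmeager_countable (fun t => measurable_BP (mA t)) dA.
have c2 := pos_countable mA dA.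
have [t ht] : exists t, ~ ([set t | ~ meager (A t)] `|`
    [set t | @lebesgue_measure R (A t) != 0%E]) t.
  apply: contrapT => /forallNP h; apply: not_countable_cantor.
  have -> : [set: nat -> bool] = [set t | ~ meager (A t)] `|`
    [set t | @lebesgue_measure R (A t) != 0%E].
    by apply/seteqP; split => // x _; apply: contrapT; exact: h.
  exact: countable_U2.
exists (@Pt R t); split.
- exact: Pt_n0.
- exact: Pt_perfect.
- by apply: contrapT => hm; apply: ht; left.
- apply/(negligibleP (@lebesgue_measure R) (mA t)); apply/eqP; apply: contrapT => hm.
  by apply: ht; right; apply/negP.
Qed.
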